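(* Let $R$ be a semifield and $X_1,\dots,X_n$ $R$-convex sets. The map $U_{(X_i)}:\prod_{i\in\underline n}X_i\to\bigotimes_{i\in\underline n}X_i$, $(x_1,\dots,x_n)\mapsto x_1\otimes\cdots\otimes x_n$, is $n$-convex, and for every $R$-convex set $Z$, restriction along $U_{(X_i)}$ is a bijection $\mathsf{CSet}_R(\bigotimes_{i}X_i,Z)\to\mathrm{Conv}_n((X_i)_{i\in\underline n},Z)$, natural in all variables.
   Context: A semifield is a commutative semiring in which every nonzero element is invertible. $D_R$ is the monad on $\mathsf{Set}$ of finitely supported $p:X\to R$ with $\sum p=1$ (pushforward, $\mu(P)(x)=\sum_qP(q)q(x)$, Dirac unit); $\mathsf{CSet}_R$ is the category of $D_R$-algebras ($R$-convex sets) and convex maps; $\sum\alpha_ix_i$ denotes the structure map applied to the formal combination $\sum\alpha_i\bullet x_i$. $\underline n=\{1,\dots,n\}$. A map $f:\prod_iX_i\to Z$ is $n$-convex if it is convex in each variable separately, i.e. $f(\dots,\sum_j\alpha_jx_j,\dots)=\sum_j\alpha_jf(\dots,x_j,\dots)$ with other arguments fixed; $\mathrm{Conv}_n((X_i),Z)$ is the set of such maps. $\bigotimes_iX_i$ is the quotient of $D_R(\prod_iX_i)$ by the smallest convex equivalence relation containing $1\bullet(\sum_{j_i}\alpha^i_{j_i}x^i_{j_i})_{i}\sim\sum_{(j_1,\dots,j_n)}\alpha^1_{j_1}\cdots\alpha^n_{j_n}\bullet(x^1_{j_1},\dots,x^n_{j_n})$, and $x_1\otimes\cdots\otimes x_n$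 denotes the class of $1\bullet(x_1,\dots,x_n)$. *)

(* Defs.v *)
From HB Require Import structures.
From mathcomp Require Import all_boot all_order all_algebra.
From mathcomp Require Import finmap generic_quotient.
From mathcomp Require Import boolp.
Set Implicit Arguments. Unset Strict Implicit. Unset Printing Implicit Defensive.
Import GRing.Theory.
Local Open Scope ring_scope.
Local Open Scope fset_scope.
Local Open Scope quotient_scope.

Section Dist.
Variable R : comPzSemiRingType.

Notation fsf X := {fsfun X -> R with 0}.

Definition dsum (X : choiceType) (p : fsf X) : R := \sum_(x <- finsupp p) p x.

Lemma dsum_sub (X : choiceType) (p : fsf X) (S : {fset X}) :
  finsupp p `<=` S -> dsum p = \sum_(x <- S) p x.
Proof.
move=> sub; rewrite /dsum; apply: big_fset_incl => // x _ xN.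
by rewrite fsfun_dflt.
Qed.

Record dist (X : choiceType) := Dist { dfun :> fsf X; dfunP : dsum dfun == 1 }.
HB.instance Definition _ (X : choiceType) := [isSub for @dfun X].
HB.instance Definition _ (X : choiceType) := [Choice of dist X by <:].

Definition dirac_fun (X : choiceType) (x : X) : fsf X :=
  [fsfun y in [fset x] => (1 : R) | 0].

Lemma dirac_funE (X : choiceType) (x y : X) :
  dirac_fun x y = if y == x then 1 else 0.
Proof. by rewrite /dirac_fun fsfun_fun inE. Qed.

Lemma dirac_subproof (X : choiceType) (x : X) : dsum (dirac_fun x) == 1.
Proof.
rewrite (@dsum_sub _ _ [fset x]) ?finsupp_sub // big_seq_fset1.
by rewrite dirac_funE eqxx.
Qed.

Definition dirac (X : choiceType) (x : X) : dist X := Dist (dirac_subproof x).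

Definition dmap_fun (X Y : choiceType) (f : X -> Y) (p : fsf X) : fsf Y :=
  [fsfun y in [fset f x | x in finsupp p] =>
     \sum_(x <- finsupp p | f x == y) p x | 0].

Lemma dmap_subproof (X Y : choiceType) (f : X -> Y) (p : dist X) :
  dsum (dmap_fun f p) == 1.
Proof.
rewrite (@dsum_sub _ _ [fset f x | x in finsupp p]) ?finsupp_sub //.
rewrite (eq_fbigr _ (G := fun y => \sum_(x <- finsupp p | f x == y) p x));
  last by move=> y yin _; rewrite /dmap_fun fsfun_fun yin.
under eq_bigr do rewrite big_mkcond.
rewrite exchange_big /= -(eqP (dfunP p)) /dsum; apply/eqP; apply: eq_fbigr => x xin _.
rewrite -big_mkcond /=.
rewrite (eq_bigl (fun y => y == f x)); last by move=> y; rewrite eq_sym.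
rewrite (@fbig_pred1_inj _ _ _ _ _ (fun=> p x) id) //.
by apply/imfsetP; exists x.
Qed.

Definition dmap (X Y : choiceType) (f : X -> Y) (p : dist X) : dist Y :=
  Dist (dmap_subproof f p).

Definition dmu_fun (X : choiceType) (P : fsf (dist X)) : fsf X :=
  [fsfun x in \bigcup_(q <- finsupp P) finsupp (dfun q) =>
     \sum_(q <- finsupp P) P q * q x | 0].

Lemma dmu_subproof (X : choiceType) (P : dist (dist X)) :
  dsum (dmu_fun P) == 1.
Proof.
set U := \bigcup_(q <- finsupp P) finsupp (dfun q).
rewrite (@dsum_sub _ _ U) ?finsupp_sub //.
rewrite (eq_fbigr _ (G := fun x => \sum_(q <- finsupp P) P q * q x));
  last by move=> x xin _; rewrite /dmu_fun fsfun_fun xin.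
rewrite exchange_big /= -(eqP (dfunP P)) /dsum; apply/eqP; apply: eq_fbigr => q qin _.
rewrite -mulr_sumr -(@dsum_sub _ q U) ?(eqP (dfunP q)) ?mulr1 //.
apply/fsubsetP => x xq; apply/bigfcupP; exists q => //.
by rewrite qin.
Qed.

Definition dmu (X : choiceType) (P : dist (dist X)) : dist X :=
  Dist (dmu_subproof P).

End Dist.

Arguments dirac {R X}.

Section Convex.
Variable R : comPzSemiRingType.

Definition is_calg (A : choiceType) (a : dist R A -> A) : Prop :=
  (forall x : A, a (dirac x) = x) /\
  (forall P : dist R (dist R A), a (dmu P) = a (dmap a P)).

(* R-convex sets = D_R-algebras *)
Record cset := CSet {
  csort :> choiceType;
  calg : dist R csort -> csort;
  calgP : is_calg calg }.

Definition is_cmap (A B : choiceType) (a : dist R A -> A) (b : dist R B -> B)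
  (f : A -> B) : Prop :=
  forall p : dist R A, f (a p) = b (dmap f p).

Definition prodc (n : nat) (X : 'I_n -> cset) : choiceType :=
  {dffun forall i : 'I_n, X i}.

Definition upd (n : nat) (X : 'I_n -> cset) (x : prodc X) (i : 'I_n) (y : X i)
  : prodc X := [ffun j => dfwith (x : forall j, X j) y j].

Definition nconvex (n : nat) (X : 'I_n -> cset) (Z : choiceType)
  (c : dist R Z -> Z) (f : prodc X -> Z) : Prop :=
  forall (i : 'I_n) (x : prodc X) (p : dist R (X i)),
    f (upd x (calg p)) = c (dmap (fun y => f (upd x y)) p).

(* the free convex structure on D_R A is mu; a relation r on D_R A is a
   convex equivalence relation if it is an equivalence relation and a convex
   subset of D_R A x D_R A *)
Definition equivalence (T : Type) (r : T -> T -> Prop) : Prop :=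
  [/\ forall a, r a a, forall a b, r a b -> r b a &
      forall a b c, r a b -> r b c -> r a c].

Definition convex_rel (A : choiceType) (r : dist R A -> dist R A -> Prop) : Prop :=
  forall Q : dist R (dist R A * dist R A)%type,
    (forall pq, pq \in finsupp Q -> r pq.1 pq.2) ->
    r (dmu (dmap fst Q)) (dmu (dmap snd Q)).

Section Tensor.
Variables (n : nat) (X : 'I_n -> cset).

(* generating pairs:
   1 . (sum_j a^i_j x^i_j)_i  ~  sum_(j_1..j_n) a^1_(j_1)...a^n_(j_n) . (x^1_(j_1),...)
   i.e. dirac of (alpha_i p_i)_i related to the product of the p_i *)
Definition tgen (u v : dist R (prodc X)) : Prop :=
  exists ps : forall i : 'I_n, dist R (X i),
    u = dirac ([ffun i => calg (ps i)] : prodc X) /\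
    forall x : prodc X, v x = \prod_(i < n) ps i (x i).

Definition trel (u v : dist R (prodc X)) : Prop :=
  forall r : dist R (prodc X) -> dist R (prodc X) -> Prop,
    equivalence r -> convex_rel r -> (forall a b, tgen a b -> r a b) -> r u v.

Definition trelb : rel (dist R (prodc X)) := fun u v => `[< trel u v >].

Lemma trelb_refl : reflexive trelb.
Proof. by move=> u; apply/asboolP => r [rr _ _] _ _; apply: rr. Qed.
Lemma trelb_sym : symmetric trelb.
Proof.
suff H : forall u v, trelb u v -> trelb v u.
  by move=> u v; apply/idP/idP; apply: H.
move=> u v /asboolP huv; apply/asboolP => r req rc rg.
by case: (req) => _ rs _; apply: rs; apply: huv.
Qed.
Lemma trelb_trans : transitive trelb.
Proof.
move=> v u w /asboolP huv /asboolP hvw; apply/asboolP => r req rc rg.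
by case: (req) => _ _ rt; apply: (rt _ v); [apply: huv | apply: hvw].
Qed.

Canonical trel_equiv := EquivRel trelb trelb_refl trelb_sym trelb_trans.

Definition tensor : choiceType := {eq_quot trel_equiv}.

Definition talg (P : dist R tensor) : tensor :=
  \pi_tensor (dmu (dmap (@repr _ tensor) P)).

Definition tunit (x : prodc X) : tensor := \pi_tensor (dirac x).

End Tensor.

Definition prodmap (n : nat) (X Y : 'I_n -> cset) (f : forall i, X i -> Y i)
  (x : prodc X) : prodc Y := [ffun i => f i (x i)].

Definition tmap (n : nat) (X Y : 'I_n -> cset) (f : forall i, X i -> Y i)
  (t : tensor X) : tensor Y :=
  \pi_(tensor Y) (dmap (prodmap f) (repr t)).

End Convex.

Arguments talg {R n} X P.
Arguments tunit {R n} X x.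
Arguments tensor {R n} X.
Arguments nconvex {R n X Z} c f.
Arguments is_cmap {R A B} a b f.
Arguments tmap {R n X Y} f t.
Arguments prodmap {R n X Y} f x.

(* Main.v *)
Require Import Defs.
From HB Require Import structures.
From mathcomp Require Import all_boot all_order all_algebra.
From mathcomp Require Import finmap generic_quotient boolp.
Import GRing.Theory.
Local Open Scope ring_scope.


Module Helpers.
Set Implicit Arguments. Unset Strict Implicit. Unset Printing Implicit Defensive.
Local Open Scope fset_scope.
Local Open Scope quotient_scope.

Section DistLemmas.
Variable R : comPzSemiRingType.

Lemma sum_pred1 (I : eqType) (S : seq I) a (F : I -> R) : uniq S ->
  \sum_(y <- S) (y == a)%:R * F y = if a \in S then F a else 0.
Proof.
move=> uS; case: ifPn => aS.
  rewrite (bigD1_seq a) //= eqxx mul1r big1 ?addr0 // => y /negPf ->.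
  by rewrite mul0r.
rewrite big1_seq // => y /andP[_ yS]; case: eqP => [ya|]; last by rewrite mul0r.
by move: aS; rewrite -ya yS.
Qed.

Lemma dist_ext (X : choiceType) (p q : dist R X) : (forall x, p x = q x) -> p = q.
Proof. by move=> h; apply: val_inj; apply/fsfunP. Qed.

Lemma int_incl (X : choiceType) (p : {fsfun X -> R with 0}) (S : {fset X}) G :
  finsupp p `<=` S ->
  \sum_(x <- S) p x * G x = \sum_(x <- finsupp p) p x * G x.
Proof.
move=> sub; apply/esym; apply: big_fset_incl => // x _ xN.
by rewrite fsfun_dflt // mul0r.
Qed.

Lemma fsfun_sum0 (X : choiceType) (p : {fsfun X -> R with 0}) y :
  y \notin finsupp p -> p y = 0.
Proof. by move=> h; rewrite fsfun_dflt. Qed.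

Lemma dmapE (X Y : choiceType) (f : X -> Y) (p : dist R X) y :
  dmap f p y = \sum_(x <- finsupp p) p x * (f x == y)%:R.
Proof.
rewrite /dmap /= /dmap_fun fsfun_fun; case: ifPn => yin.
  by rewrite big_mkcond /=; apply: eq_bigr => x _; case: eqP; rewrite ?mulr1 ?mulr0.
rewrite big1_seq // => x /andP[_ xin]; case: eqP => [fx|]; last by rewrite mulr0.
by move: yin; rewrite -fx in_imfset.
Qed.

Lemma dmuE (X : choiceType) (P : dist R (dist R X)) y :
  dmu P y = \sum_(q <- finsupp P) P q * q y.
Proof.
rewrite /dmu /= /dmu_fun fsfun_fun; case: ifPn => // yin.
rewrite big1_seq // => q /andP[_ qin]; rewrite [dfun q y]fsfun_dflt ?mulr0 //.
apply/negP => yq; move/negP: yin; apply; apply/bigfcupP; exists q => //; by rewrite qin.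
Qed.

Lemma diracE (X : choiceType) (x y : X) : dirac x y = (y == x)%:R :> R.
Proof. by rewrite /dirac /= dirac_funE; case: eqP. Qed.

Lemma supp_dirac (X : choiceType) (x : X) : finsupp (dirac (R:=R) x) `<=` [fset x].
Proof. exact: finsupp_sub. Qed.

Lemma supp_dmap (X Y : choiceType) (f : X -> Y) (p : dist R X) :
  finsupp (dmap f p) `<=` [fset f x | x in finsupp p].
Proof. exact: finsupp_sub. Qed.

Lemma supp_dmu (X : choiceType) (P : dist R (dist R X)) :
  finsupp (dmu P) `<=` \bigcup_(q <- finsupp P) finsupp (dfun q).
Proof. exact: finsupp_sub. Qed.

Lemma int_dmap (X Y : choiceType) (f : X -> Y) (p : dist R X) (G : Y -> R) :
  \sum_(y <- finsupp (dmap f p)) dmap f p y * G y =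
  \sum_(x <- finsupp p) p x * G (f x).
Proof.
rewrite -(int_incl _ (supp_dmap f p)).
under eq_bigr do rewrite dmapE mulr_suml.
rewrite exchange_big /= big_seq [RHS]big_seq; apply: eq_bigr => x xin.
under eq_bigr do rewrite -mulrA mulrCA eq_sym.
by rewrite sum_pred1 ?fset_uniq // in_imfset.
Qed.

Lemma sum_supp_ind (X : choiceType) (p : {fsfun X -> R with 0}) y :
  \sum_(x <- finsupp p) p x * (x == y)%:R = p y.
Proof.
under eq_bigr do rewrite mulrC.
rewrite sum_pred1 ?fset_uniq //; case: ifPn => // /fsfun_dflt -> //.
Qed.

Lemma dmap_dirac (X Y : choiceType) (f : X -> Y) (x : X) :
  dmap f (dirac (R:=R) x) = dirac (f x).
Proof.
apply: dist_ext => y; rewrite dmapE -(int_incl _ (supp_dirac x)) big_seq_fset1.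
by rewrite !diracE eqxx mul1r eq_sym.
Qed.

Lemma dmap_comp (X Y Z : choiceType) (f : X -> Y) (g : Y -> Z) (p : dist R X) :
  dmap g (dmap f p) = dmap (g \o f) p.
Proof.
apply: dist_ext => z; rewrite !dmapE.
by rewrite (int_dmap f p (fun y => (g y == z)%:R)).
Qed.

Lemma dmap_eq (X Y : choiceType) (f g : X -> Y) (p : dist R X) :
  {in finsupp p, f =1 g} -> dmap f p = dmap g p.
Proof.
move=> h; apply: dist_ext => y; rewrite !dmapE big_seq [RHS]big_seq.
by apply: eq_bigr => x xin; rewrite h.
Qed.

Lemma dmap_id (X : choiceType) (p : dist R X) : dmap id p = p.
Proof. by apply: dist_ext => y; rewrite dmapE sum_supp_ind. Qed.

Lemma dmu_dirac (X : choiceType) (p : dist R X) : dmu (dirac p) = p.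
Proof.
apply: dist_ext => y; rewrite dmuE -(int_incl _ (supp_dirac p)) big_seq_fset1.
by rewrite diracE eqxx mul1r.
Qed.

Lemma dmu_dmap_dirac (X : choiceType) (p : dist R X) : dmu (dmap dirac p) = p.
Proof.
apply: dist_ext => y; rewrite dmuE (int_dmap dirac p (fun q => q y)).
under eq_bigr do rewrite diracE eq_sym.
by rewrite sum_supp_ind.
Qed.

Lemma dmap_dmu (X Y : choiceType) (f : X -> Y) (P : dist R (dist R X)) :
  dmap f (dmu P) = dmu (dmap (dmap f) P).
Proof.
apply: dist_ext => z; rewrite dmapE dmuE (int_dmap (dmap f) P (fun q => q z)).
rewrite -(int_incl _ (supp_dmu P)).
under [LHS]eq_bigr do rewrite dmuE mulr_suml.
rewrite exchange_big /= big_seq [RHS]big_seq; apply: eq_bigr => q qin.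
under eq_bigr do rewrite -mulrA.
rewrite -mulr_sumr dmapE int_incl //.
apply/fsubsetP => x xq; apply/bigfcupP; exists q => //; by rewrite qin.
Qed.

Lemma dmu_dmu (X : choiceType) (P : dist R (dist R (dist R X))) :
  dmu (dmu P) = dmu (dmap (@dmu R X) P).
Proof.
apply: dist_ext => y; rewrite dmuE dmuE (int_dmap (@dmu R X) P (fun q => q y)).
set S := finsupp (dmu P) `|` \bigcup_(Q <- finsupp P) finsupp (dfun Q).
rewrite -(int_incl (S := S)) ?fsubsetUl //.
under [LHS]eq_bigr do rewrite dmuE mulr_suml.
rewrite exchange_big /= big_seq [RHS]big_seq; apply: eq_bigr => Q Qin.
under eq_bigr do rewrite -mulrA.
rewrite -mulr_sumr dmuE (int_incl (S := S)) //.
apply/fsubsetP => x xq; rewrite inE; apply/orP; right.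
apply/bigfcupP; exists Q => //; by rewrite Qin.
Qed.

End DistLemmas.


Section Gen.
Variable R : comPzSemiRingType.

Lemma conv_app (A : choiceType) (r : dist R A -> dist R A -> Prop) :
  convex_rel r -> forall (T : choiceType) (P : dist R T) (F G : T -> dist R A),
  (forall q, q \in finsupp P -> r (F q) (G q)) ->
  r (dmu (dmap F P)) (dmu (dmap G P)).
Proof.
move=> rc T P F G h.
have := rc (dmap (fun q => (F q, G q)) P); rewrite !dmap_comp; apply.
move=> pq /(fsubsetP (supp_dmap _ _)) /imfsetP [q /= qin ->] /=.
exact: h.
Qed.

Lemma calg_dmu (Z : cset R) (P : dist R (dist R Z)) :
  calg (dmu P) = calg (dmap (@calg R Z) P).
Proof. by case: (calgP Z) => _ ->. Qed.

Lemma calg_dirac (Z : cset R) (z : Z) : calg (dirac z) = z.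
Proof. by case: (calgP Z) => ->. Qed.

Lemma calg_dmap_dmu (Y : choiceType) (Z : cset R) (f : Y -> Z) (P : dist R (dist R Y)) :
  calg (dmap f (dmu P)) = calg (dmap (fun q => calg (dmap f q)) P).
Proof. by rewrite dmap_dmu calg_dmu dmap_comp. Qed.

Variables (n : nat) (X : 'I_n -> cset R).

Lemma trel_equivalence : equivalence (@trel R n X).
Proof.
split.
- by move=> a r [rr _ _] _ _; apply: rr.
- by move=> a b h r req rc rg; case: (req) => _ rs _; apply: rs; apply: h.
- by move=> a b c h1 h2 r req rc rg; case: (req) => _ _ rt; apply: (rt _ b); [apply: h1|apply: h2].
Qed.

Lemma trel_convex : convex_rel (@trel R n X).
Proof.
move=> Q h r req rc rg; apply: (rc) => pq pqin; exact: (h pq pqin r req rc rg).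
Qed.

Lemma trel_gen a b : tgen a b -> @trel R n X a b.
Proof. by move=> g r _ _ rg; apply: rg. Qed.

Lemma pi_eq u v : @trel R n X u v -> \pi_(tensor X) u = \pi_(tensor X) v.
Proof. by move=> h; apply/eqquotP; apply/asboolP. Qed.

Lemma repr_pi u : @trel R n X (repr (\pi_(tensor X) u)) u.
Proof.
have : @trelb R n X (repr (\pi_(tensor X) u)) u.
  by apply/(eqquotP (tensor X)); rewrite reprK.
by move/asboolP.
Qed.

Lemma trel_sym u v : @trel R n X u v -> @trel R n X v u.
Proof. by case: trel_equivalence => _ s _; apply: s. Qed.

Lemma talg_calg : is_calg (talg X).
Proof.
split.
  by move=> t; rewrite /talg dmap_dirac dmu_dirac reprK.
move=> P; rewrite /talg dmap_dmu dmu_dmu !dmap_comp; apply: pi_eq.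
apply: (conv_app trel_convex) => q _ /=; apply: trel_sym; exact: repr_pi.
Qed.

Definition tcset : cset R := CSet talg_calg.

Lemma talg_tunit u : talg X (dmap (tunit X) u) = \pi_(tensor X) u.
Proof.
rewrite /talg dmap_comp -[in RHS](dmu_dmap_dirac u); apply: pi_eq.
apply: (conv_app trel_convex) => q _ /=; exact: repr_pi.
Qed.

End Gen.


Section Upd.
Variable R : comPzSemiRingType.
Variables (n : nat) (X : 'I_n -> cset R).

Lemma updE (x : prodc X) i (y : X i) j : upd x y j = dfwith (x : forall j, X j) y j.
Proof. by rewrite ffunE. Qed.

Lemma upd_same (x : prodc X) i : upd x (x i) = x.
Proof.
apply/ffunP => j; rewrite updE; have [<-|ij] := eqVneq i j.
  by rewrite dfwith_in.
by rewrite dfwith_out.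
Qed.

Lemma upd_eq (x : prodc X) i (z : X i) (y : prodc X) :
  (upd x z == y) = (z == y i) && [forall j, (j != i) ==> (y j == x j)].
Proof.
apply/eqP/andP => [<-|[/eqP zi /forallP h]].
  split; first by rewrite updE dfwith_in.
  apply/forallP => j; apply/implyP => ji; rewrite updE dfwith_out //.
  by rewrite eq_sym.
apply/ffunP => j; rewrite updE; have [<-|ij] := eqVneq i j.
  by rewrite dfwith_in zi.
rewrite dfwith_out //; move: (h j); rewrite eq_sym ij /=.
by move/eqP.
Qed.

Lemma upd_dmap (x : prodc X) i (p : dist R (X i)) y :
  dmap (fun z : X i => upd x z) p y = p (y i) * [forall j, (j != i) ==> (y j == x j)]%:R.
Proof.
rewrite dmapE; under eq_bigr do rewrite upd_eq.
case: [forall j, _]; first by under eq_bigr do rewrite andbT; rewrite sum_supp_ind mulr1.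
by rewrite mulr0 big1 // => z _; rewrite andbF mulr0.
Qed.

Lemma prod_ind i (y x : prodc X) :
  \prod_(j | j != i) (y j == x j)%:R = [forall j, (j != i) ==> (y j == x j)]%:R :> R.
Proof.
case: (boolP [forall j, _]) => [/forallP h | /forallPn [j]].
  by rewrite big1 // => j ji; move: (h j); rewrite ji /= => ->.
rewrite negb_imply => /andP[ji neq]; rewrite (bigD1 j) //= (negPf neq) mul0r.
by [].
Qed.

Lemma tunit_nconvex : nconvex (talg X) (tunit X).
Proof.
move=> i x p.
have -> : talg X (dmap (fun y => tunit X (upd x y)) p) =
          \pi_(tensor X) (dmap (fun z : X i => upd x z) p).
  by rewrite -talg_tunit dmap_comp.
rewrite /tunit; apply: pi_eq; apply: trel_gen.
exists (@dfwith _ (fun j => dist R (X j)) (fun j => dirac (x j)) i p); split.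
  congr dirac; apply/ffunP => j; rewrite !ffunE; have [<-|ij] := eqVneq i j.
    by rewrite !dfwith_in.
  by rewrite !dfwith_out // calg_dirac.
move=> y; rewrite upd_dmap (bigD1 i) //= dfwith_in -prod_ind; congr (_ * _).
apply: eq_bigr => j ji; have ij : i != j by rewrite eq_sym.
by rewrite dfwith_out // diracE.
Qed.

End Upd.


Section Expand.
Variable R : comPzSemiRingType.
Variables (n : nat) (X : 'I_n -> cset R).
Variable ps : forall i : 'I_n, dist R (X i).

Let x0 : prodc X := [ffun i => calg (ps i)].

Definition stepD (k : nat) (D : dist R (prodc X)) : dist R (prodc X) :=
  match (insub k : option 'I_n) with
  | Some i => dmu (dmap (fun x => dmap (fun z : X i => upd x z) (ps i)) D)
  | None => D
  end.

Fixpoint Dk (k : nat) : dist R (prodc X) :=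
  if k is k'.+1 then stepD k' (Dk k') else dirac x0.

Lemma step_formula i (D : dist R (prodc X)) :
  (forall x, x \in finsupp D -> x i = x0 i) -> forall y,
  dmu (dmap (fun x => dmap (fun z : X i => upd x z) (ps i)) D) y =
  D (upd y (x0 i)) * ps i (y i).
Proof.
move=> hD y; rewrite dmuE (int_dmap (fun x => dmap (fun z : X i => upd x z) (ps i)) D (fun q => q y)).
transitivity (\sum_(x <- finsupp D) D x * (x == upd y (x0 i))%:R * ps i (y i)).
  rewrite big_seq [RHS]big_seq; apply: eq_bigr => x xin /=.
  rewrite upd_dmap mulrA mulrAC; congr (_ * _ * _).
  have -> : (x == upd y (x0 i)) = (upd y (x0 i) == x) by rewrite eq_sym.
  rewrite upd_eq (hD x xin) eqxx /=.
  suff -> : [forall j, (j != i) ==> (x j == y j)] = [forall j, (j != i) ==> (y j == x j)] by [].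
  by apply/forallP/forallP => h j; move: (h j); [rewrite [x j == _]eq_sym | rewrite [y j == _]eq_sym].
by rewrite -mulr_suml sum_supp_ind.
Qed.

Lemma Dk_formula k : (k <= n)%N -> forall y,
  Dk k y = (\prod_(j : 'I_n | (j < k)%N) ps j (y j)) *
           [forall j : 'I_n, (k <= j)%N ==> (y j == x0 j)]%:R.
Proof.
elim: k => [_|k IH hk] y.
  rewrite /= diracE big1 ?mul1r //; congr ((nat_of_bool _)%:R).
  apply/idP/idP => [/eqP -> | /forallP h]; first by apply/forallP.
  by apply/eqP/ffunP => j; apply/eqP; exact: h.
have hk' : (k <= n)%N by apply: ltnW.
rewrite /= /stepD; case: insubP => [i _ iE|]; last by rewrite hk.
have hD : forall x, x \in finsupp (Dk k) -> x i = x0 i.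
  move=> x; rewrite mem_finsupp IH //.
  case: (boolP [forall j, _]) => [/forallP h _|]; last by rewrite mulr0 eqxx.
  by move: (h i); rewrite iE leqnn /= => /eqP.
rewrite step_formula // IH //.
rewrite [in RHS](bigD1 i) /= ?iE ?ltnSn //.
have P1 : \prod_(j < n | (j < k)%N) ps j (upd y (x0 i) j) =
          \prod_(j < n | (j < k.+1)%N && (j != i)) ps j (y j).
  apply: eq_big => j.
    case: (eqVneq j i) => [->|ji]; first by rewrite iE ltnn andbF.
    have jk : (nat_of_ord j != k) by rewrite -iE.
    by rewrite andbT ltnS [(j <= k)%N]leq_eqVlt (negPf jk).
  move=> jk; rewrite updE dfwith_out //.
  by apply/eqP => ij; move: jk; rewrite -ij iE ltnn.
have F1 : [forall j : 'I_n, (k <= j)%N ==> (upd y (x0 i) j == x0 j)] =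
          [forall j : 'I_n, (k < j)%N ==> (y j == x0 j)].
  apply/forallP/forallP => h j; move: (h j); rewrite updE.
    have [<-|ij] := eqVneq i j; first by rewrite iE ltnn.
    by rewrite dfwith_out // => H; apply/implyP => kj; apply: (implyP H); apply: ltnW.
  have [<-|ij] := eqVneq i j; first by rewrite dfwith_in eqxx implybT.
  rewrite dfwith_out // => H; apply/implyP => kj; apply: (implyP H).
  by rewrite ltn_neqAle kj andbT; apply: contraNneq ij => kE; apply/eqP/val_inj; rewrite /= iE.
by rewrite P1 F1 mulrAC [_ * ps i _]mulrC.
Qed.

Lemma Dk_n (v : dist R (prodc X)) :
  (forall x, v x = \prod_(i < n) ps i (x i)) -> Dk n = v.
Proof.
move=> hv; apply: dist_ext => y; rewrite Dk_formula // hv.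
have -> : [forall j : 'I_n, (n <= j)%N ==> (y j == x0 j)].
  by apply/forallP => j; rewrite leqNgt ltn_ord.
by rewrite mulr1; apply: eq_bigl => j; rewrite ltn_ord.
Qed.

Variables (Z : cset R) (f : prodc X -> Z).
Hypothesis hf : nconvex (@calg R Z) f.

Lemma lemA i (p : dist R (X i)) (Q : dist R (prodc X)) :
  calg (dmap f (dmu (dmap (fun x => dmap (fun z : X i => upd x z) p) Q))) =
  calg (dmap f (dmap (fun x => upd x (calg p)) Q)).
Proof.
rewrite calg_dmap_dmu !dmap_comp; congr calg; apply: dmap_eq => x _ /=.
by rewrite hf dmap_comp.
Qed.

Lemma Dk_chain k : (k <= n)%N -> calg (dmap f (Dk k)) = f x0.
Proof.
elim: k => [_|k IH hk]; first by rewrite /= dmap_dirac calg_dirac.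
have hk' : (k <= n)%N by apply: ltnW.
rewrite /= /stepD; case: insubP => [i _ iE|]; last by rewrite hk.
rewrite lemA -(IH hk'); congr calg; congr dmap.
rewrite -[RHS]dmap_id; apply: dmap_eq => x xin /=.
have -> : calg (ps i) = x i.
  move: xin; rewrite mem_finsupp Dk_formula //.
  case: (boolP [forall j, _]) => [/forallP h _|]; last by rewrite mulr0 eqxx.
  by move: (h i); rewrite iE leqnn /= => /eqP ->; rewrite ffunE.
exact: upd_same.
Qed.

Lemma expand (v : dist R (prodc X)) :
  (forall x, v x = \prod_(i < n) ps i (x i)) ->
  f [ffun i => calg (ps i)] = calg (dmap f v).
Proof. by move=> hv; rewrite -(Dk_n hv) Dk_chain. Qed.

End Expand.


Section Lift.
Variable R : comPzSemiRingType.
Variables (n : nat) (X : 'I_n -> cset R).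
Variables (Z : cset R) (f : prodc X -> Z).
Hypothesis hf : nconvex (@calg R Z) f.

Definition lift (t : tensor X) : Z := calg (dmap f (repr t)).

Lemma resp u v : @trel R n X u v -> calg (dmap f u) = calg (dmap f v).
Proof.
move=> h; apply: (h (fun u v => calg (dmap f u) = calg (dmap f v))).
- by split; [done | move=> a b -> | move=> a b c -> ->].
- move=> Q hQ; rewrite !calg_dmap_dmu !dmap_comp; congr calg.
  by apply: dmap_eq => pq pqin /=; apply: hQ.
- move=> a b [ps [-> hb]]; rewrite dmap_dirac calg_dirac.
  exact: (expand hf hb).
Qed.

Lemma lift_cmap : is_cmap (talg X) (@calg R Z) lift.
Proof.
move=> P; rewrite /lift /talg (resp (repr_pi _)) calg_dmap_dmu dmap_comp.
by [].
Qed.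

Lemma lift_tunit x : lift (tunit X x) = f x.
Proof. by rewrite /lift /tunit (resp (repr_pi _)) dmap_dirac calg_dirac. Qed.

End Lift.

Section Main.
Variable R : comPzSemiRingType.
Variables (n : nat) (X : 'I_n -> cset R).

Lemma prodmap_upd (Y : 'I_n -> cset R) (f : forall i, X i -> Y i)
  (x : prodc X) i (z : X i) :
  prodmap f (upd x z) = upd (prodmap f x) (f i z).
Proof.
apply/ffunP => j; rewrite !ffunE; have [<-|ij] := eqVneq i j.
  by rewrite !dfwith_in.
by rewrite !dfwith_out // ffunE.
Qed.

Lemma main_all :
  is_calg (talg X) /\
  nconvex (talg X) (tunit X) /\
  (forall Z : cset R,
     (forall g : tensor X -> Z,
        is_cmap (talg X) (@calg R Z) g -> nconvex (@calg R Z) (g \o tunit X)) /\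
     (forall g1 g2 : tensor X -> Z,
        is_cmap (talg X) (@calg R Z) g1 -> is_cmap (talg X) (@calg R Z) g2 ->
        (forall x, g1 (tunit X x) = g2 (tunit X x)) -> forall t, g1 t = g2 t) /\
     (forall f : prodc X -> Z, nconvex (@calg R Z) f ->
        exists g : tensor X -> Z,
          is_cmap (talg X) (@calg R Z) g /\ forall x, g (tunit X x) = f x)) /\
  (forall (Y : 'I_n -> cset R) (f : forall i, X i -> Y i),
     (forall i, is_cmap (@calg R (X i)) (@calg R (Y i)) (f i)) ->
     is_cmap (talg X) (talg Y) (tmap f) /\
     forall (Z : cset R) (g : tensor Y -> Z), is_cmap (talg Y) (@calg R Z) g ->
       forall x, (g \o tmap f) (tunit X x) = (g \o tunit Y) (prodmap f x)) /\
  (forall (Z Z' : cset R) (h : Z -> Z') (g : tensor X -> Z),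
     is_cmap (@calg R Z) (@calg R Z') h -> is_cmap (talg X) (@calg R Z) g ->
     is_cmap (talg X) (@calg R Z') (h \o g) /\
     forall x, (h \o g) (tunit X x) = h ((g \o tunit X) x)).
Proof.
split; first exact: talg_calg.
split; first exact: tunit_nconvex.
split.
  move=> Z; split; [|split].
  - move=> g hg i x p /=; rewrite tunit_nconvex hg dmap_comp.
    by [].
  - move=> g1 g2 hg1 hg2 h t.
    rewrite -(reprK t) -talg_tunit hg1 hg2 !dmap_comp; congr calg.
    by apply: dmap_eq => x _ /=; apply: h.
  - move=> f hf; exists (lift f); split; first exact: lift_cmap.
    exact: lift_tunit.
split.
  move=> Y f hf.
  pose Ft := (tunit Y \o prodmap f).
  have hFt : nconvex (@calg R (tcset Y)) Ft.
    move=> i x p /=; rewrite /Ft /= prodmap_upd hf tunit_nconvex dmap_comp.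
    congr (talg Y); apply: dmap_eq => z _ /=.
    by rewrite prodmap_upd.
  have E : forall t, tmap f t = @lift R n X (tcset Y) Ft t.
    by move=> t; rewrite /lift /tmap /Ft -(dmap_comp (prodmap f) (tunit Y)) /= talg_tunit.
  split.
    move=> P; rewrite E (lift_cmap hFt) /=; congr (talg Y).
    by apply: dmap_eq => t _; rewrite E.
  by move=> Z g hg x /=; rewrite E lift_tunit.
move=> Z Z' h g hh hg; split; last by [].
by move=> P /=; rewrite hg hh dmap_comp.
Qed.

End Main.


End Helpers.
Import Helpers.
Unset Implicit Arguments. Set Strict Implicit. Set Printing Implicit Defensive.

Theorem mainTheorem15 (R : comNzSemiRingType)
  (semifield : forall a : R, a != 0 -> exists b : R, a * b = 1)
  (n : nat) (X : 'I_n -> cset R) :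
  (* the tensor product, with its induced structure, is an R-convex set *)
  is_calg (talg X) /\
  (* U_(X_i) is n-convex *)
  nconvex (talg X) (tunit X) /\
  (* restriction along U_(X_i) is a bijection CSet_R(tensor X, Z) -> Conv_n(X, Z) *)
  (forall Z : cset R,
     (forall g : tensor X -> Z,
        is_cmap (talg X) (@calg R Z) g -> nconvex (@calg R Z) (g \o tunit X)) /\
     (forall g1 g2 : tensor X -> Z,
        is_cmap (talg X) (@calg R Z) g1 -> is_cmap (talg X) (@calg R Z) g2 ->
        (forall x, g1 (tunit X x) = g2 (tunit X x)) -> forall t, g1 t = g2 t) /\
     (forall f : prodc X -> Z, nconvex (@calg R Z) f ->
        exists g : tensor X -> Z,
          is_cmap (talg X) (@calg R Z) g /\ forall x, g (tunit X x) = f x)) /\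
  (* naturality in the X_i *)
  (forall (Y : 'I_n -> cset R) (f : forall i, X i -> Y i),
     (forall i, is_cmap (@calg R (X i)) (@calg R (Y i)) (f i)) ->
     is_cmap (talg X) (talg Y) (tmap f) /\
     forall (Z : cset R) (g : tensor Y -> Z), is_cmap (talg Y) (@calg R Z) g ->
       forall x, (g \o tmap f) (tunit X x) = (g \o tunit Y) (prodmap f x)) /\
  (* naturality in Z *)
  (forall (Z Z' : cset R) (h : Z -> Z') (g : tensor X -> Z),
     is_cmap (@calg R Z) (@calg R Z') h -> is_cmap (talg X) (@calg R Z) g ->
     is_cmap (talg X) (@calg R Z') (h \o g) /\
     forall x, (h \o g) (tunit X x) = h ((g \o tunit X) x)).
Proof. exact: (@main_all R n X). Qed.
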